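(* Let $k\ge2$ and let $G\in\mathbb{N}_0^k$ with $g_1>0$. If $G$ is telescopic, then $\rho_n(G)$ is telescopic for every $n\in\{2,\dots,k\}$.
   Context: $\langle A\rangle$ is the set of $\mathbb{N}_0$-linear combinations. For $G=(g_1,\dots,g_k)$ with $g_1>0$: $G_i=(g_1,\dots,g_i)$, $d_i=\gcd(G_i)$, $c(G)=(c_2,\dots,c_k)$ with $c_j=d_{j-1}/d_j$; $G$ is telescopic if $c_jg_j\in\langle G_{j-1}\rangle$ for $2\le j\le k$. For $k\ge2$ and $2\le n\le k$, $\rho_n(G)=(g_1/c_n,\dots,g_{n-1}/c_n,g_{n+1},\dots,g_k)\in\mathbb{N}_0^{k-1}$ (the entries $g_i/c_n$, $i<n$, are integers since $c_n\mid d_{n-1}$). *)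

(* Defs.v *)
(* Sequences G : seq nat with the paper's 1-based index j
   corresponding to position j-1 in the list. *)
From mathcomp Require Import all_boot.
Set Implicit Arguments. Unset Strict Implicit. Unset Printing Implicit Defensive.

Definition inSG (A : seq nat) (x : nat) : Prop :=
  exists a : nat -> nat, x = \sum_(i < size A) a i * nth 0 A i.

Definition dpref (G : seq nat) (i : nat) : nat := \big[gcdn/0]_(g <- take i G) g.

Definition cc (G : seq nat) (j : nat) : nat := dpref G j.-1 %/ dpref G j.

Definition gj (G : seq nat) (j : nat) : nat := nth 0 G j.-1.

Definition telescopic (G : seq nat) : Prop :=
  0 < head 0 G /\
  forall j, 2 <= j <= size G -> inSG (take j.-1 G) (cc G j * gj G j).

Definition rho (n : nat) (G : seq nat) : seq nat :=
  map (fun g => g %/ cc G n) (take n.-1 G) ++ drop n G.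

(* Main.v *)
Require Import Defs.
From mathcomp Require Import all_boot zify.

Lemma inSG_nil x : inSG [::] x <-> x = 0.
Proof.
split; first by case=> a ->; rewrite big_ord0.
by move=> ->; exists (fun _ => 0); rewrite big_ord0.
Qed.

Lemma inSG_cons y A x : inSG (y :: A) x <-> exists m z, inSG A z /\ x = m * y + z.
Proof.
split.
- case=> a ->. rewrite /= big_ord_recl /=.
  exists (a 0), (\sum_(i < size A) a (lift ord0 i) * nth 0 (y :: A) (lift ord0 i)).
  split=> //. by exists (fun i => a i.+1).
- case=> m [z [[a ->] ->]]. exists (fun i => if i is i'.+1 then a i' else m).
  by rewrite /= big_ord_recl.
Qed.

Lemma inSG0 A : inSG A 0.
Proof.
elim: A => [|y A IH]; first by apply/inSG_nil.
by apply/inSG_cons; exists 0, 0; rewrite mul0n.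
Qed.

Lemma inSG_add A x1 x2 : inSG A x1 -> inSG A x2 -> inSG A (x1 + x2).
Proof.
elim: A x1 x2 => [|y A IH] x1 x2.
  by move=> /inSG_nil -> /inSG_nil ->; apply/inSG_nil.
move=> /inSG_cons [m1 [z1 [h1 ->]]] /inSG_cons [m2 [z2 [h2 ->]]].
apply/inSG_cons; exists (m1 + m2), (z1 + z2); split; first exact: IH.
lia.
Qed.

Lemma inSG_mul A k x : inSG A x -> inSG A (k * x).
Proof.
elim: A x => [|y A IH] x.
  by move=> /inSG_nil ->; apply/inSG_nil; rewrite muln0.
move=> /inSG_cons [m [z [h ->]]].
apply/inSG_cons; exists (k * m), (k * z); split; first exact: IH.
by rewrite mulnDr mulnA.
Qed.

Lemma inSG_mem A y : y \in A -> inSG A y.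
Proof.
elim: A => [|a A IH] //. rewrite in_cons => /orP [/eqP ->|h].
  by apply/inSG_cons; exists 1, 0; split; [exact: inSG0 | rewrite mul1n addn0].
by apply/inSG_cons; exists 0, y; split; [exact: IH | rewrite mul0n].
Qed.

Lemma inSG_trans A B x : (forall y, y \in A -> inSG B y) -> inSG A x -> inSG B x.
Proof.
elim: A x => [|a A IH] x hAB.
  by move=> /inSG_nil ->; exact: inSG0.
move=> /inSG_cons [m [z [h ->]]].
apply: inSG_add; first by apply: inSG_mul; apply: hAB; rewrite mem_head.
apply: IH h => y hy; apply: hAB; by rewrite in_cons hy orbT.
Qed.

Lemma inSG_catl A B x : inSG A x -> inSG (A ++ B) x.
Proof. apply: inSG_trans => y hy; apply: inSG_mem; by rewrite mem_cat hy. Qed.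

Lemma inSG_catr A B x : inSG B x -> inSG (A ++ B) x.
Proof. apply: inSG_trans => y hy; apply: inSG_mem; by rewrite mem_cat hy orbT. Qed.

Lemma inSG_div c A x : 0 < c -> (forall y, y \in A -> c %| y) -> inSG A x ->
  exists w, x = c * w /\ inSG (map (fun g => g %/ c) A) w.
Proof.
move=> c0; elim: A x => [|a A IH] x hd.
  by move=> /inSG_nil ->; exists 0; split; [rewrite muln0 | apply/inSG_nil].
move=> /inSG_cons [m [z [h ->]]].
have [w [-> hw]] : exists w, z = c * w /\ inSG (map (fun g => g %/ c) A) w.
  apply: IH h => y hy; apply: hd; by rewrite in_cons hy orbT.
have ha : a = c * (a %/ c) by rewrite mulnC divnK // hd // mem_head.
exists (m * (a %/ c) + w); split; last first.
  by apply/inSG_cons; exists m, w.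
rewrite {1}ha; lia.
Qed.

Lemma inSG_divE c A x : 0 < c -> (forall y, y \in A -> c %| y) -> inSG A (c * x) ->
  inSG (map (fun g => g %/ c) A) x.
Proof.
move=> c0 hd h; have [w [e hw]] := @inSG_div c A (c * x) c0 hd h.
have -> : x = w by apply/eqP; rewrite -(eqn_pmul2l c0) e.
exact: hw.
Qed.

Lemma inSG_mulmap c A w : 0 < c -> (forall y, y \in A -> c %| y) ->
  inSG (map (fun g => g %/ c) A) w -> inSG A (c * w).
Proof.
move=> c0; elim: A w => [|a A IH] w hd.
  by move=> /inSG_nil ->; apply/inSG_nil; rewrite muln0.
move=> /inSG_cons [m [z [h ->]]].
have ha : a = c * (a %/ c) by rewrite mulnC divnK // hd // mem_head.
apply/inSG_cons; exists m, (c * z); split.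
  apply: IH h => y hy; apply: hd; by rewrite in_cons hy orbT.
rewrite {2}ha; lia.
Qed.

Definition bg (s : seq nat) := \big[gcdn/0]_(g <- s) g.

Lemma bg_dvd s g : g \in s -> bg s %| g.
Proof.
rewrite /bg; elim: s => [|a s IH] //; rewrite big_cons in_cons => /orP [/eqP ->|h].
  exact: dvdn_gcdl.
exact: dvdn_trans (dvdn_gcdr _ _) (IH h).
Qed.

Lemma bg_dvdall c s : (forall y, y \in s -> c %| y) -> c %| bg s.
Proof.
rewrite /bg; elim: s => [|a s IH] h; first by rewrite big_nil dvdn0.
rewrite big_cons dvdn_gcd h ?mem_head //=; apply: IH => y hy; apply: h.
by rewrite in_cons hy orbT.
Qed.

Lemma bg_map c s : 0 < c -> (forall y, y \in s -> c %| y) ->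
  bg (map (fun g => g %/ c) s) = bg s %/ c.
Proof.
move=> c0; elim: s => [|a s IH] h; first by rewrite /bg !big_nil div0n.
have hs : forall y, y \in s -> c %| y by move=> y hy; apply: h; rewrite in_cons hy orbT.
rewrite /= /bg !big_cons -/(bg _) -/(bg s) IH //.
have /divnK ea := h a (mem_head _ _). have /divnK et := @bg_dvdall c s hs.
rewrite -ea -et -muln_gcdl !mulnK //.
Qed.

Theorem mainTheorem11 (G : seq nat) :
  2 <= size G -> 0 < head 0 G -> telescopic G ->
  forall n, 2 <= n <= size G -> telescopic (rho n G).
Proof.
move=> hk hg1 [_ htel] [//|[//|m']] /andP [_ hn].
set m := m'.+1.
set d := dpref G.
have dE i : d i = bg (take i G) by [].
set c := cc G m.+1.
have dm0 : 0 < d m.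
  have hG : head 0 G \in take m G.
    by clear -hk; case: G hk => [//|a G] _ /=; rewrite mem_head.
  have := bg_dvd _ _ hG; rewrite dE lt0n; apply: contraTneq => ->.
  by rewrite dvd0n -lt0n hg1.
have dSm : d m.+1 = gcdn (d m) (nth 0 G m).
  rewrite !dE (take_nth 0) // -cats1 /bg big_cat big_seq1 //.
have dS0 : 0 < d m.+1 by rewrite dSm gcdn_gt0 dm0.
have cE : c * d m.+1 = d m.
  by rewrite /c /cc /= -/d divnK // dSm dvdn_gcdl.
have c0 : 0 < c by move: dm0; rewrite -cE muln_gt0 => /andP [].
have cdvd : forall y, y \in take m G -> c %| y.
  move=> y hy; apply: dvdn_trans (bg_dvd _ _ hy); rewrite -dE -cE; exact: dvdn_mulr.
have hsz : size (take m G) = m by rewrite size_takel //; lia.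
have Hsz : size (rho m.+1 G) = (size G).-1.
  by rewrite /rho size_cat size_map hsz size_drop; lia.
have dHlo i : i <= m -> dpref (rho m.+1 G) i = d i %/ c.
  move=> hi; rewrite dE /dpref /rho take_cat size_map hsz.
  have -> : take i G = take i (take m G) by rewrite take_takel.
  case: ltngtP hi => // [hlt|->] _.
    rewrite -map_take -/(bg _) bg_map //; move=> y /mem_take; exact: cdvd.
  rewrite subnn take0 cats0 -/(bg _) bg_map // take_takel //.
have dHhi i : m <= i -> dpref (rho m.+1 G) i = d i.+1.
  move=> hi; rewrite /dpref /rho take_cat size_map hsz ltnNge hi /=.
  rewrite big_cat /= -/(bg _) bg_map // -/(bg _) -dE -/d.
  have -> : i.+1 = m.+1 + (i - m) by lia.
  rewrite [d (_ + _)]dE takeD /bg big_cat /= -/(bg (take m.+1 G)) -dE -/c.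
  by rewrite -cE mulKn.
split.
  rewrite /rho -nth0 nth_cat size_map hsz (nth_map 0) ?hsz // nth_take // nth0 -/c.
  have hG : head 0 G \in take m G.
    by clear -hk; case: G hk => [//|a G] _ /=; rewrite mem_head.
  by rewrite divn_gt0 //; apply: dvdn_leq => //; apply: cdvd.
move=> j /andP [hj2 hjs]; rewrite Hsz in hjs.
have cdvd' i y : i <= m -> y \in take i G -> c %| y.
  move=> hi; rewrite -(take_takel _ hi) => /mem_take; exact: cdvd.
have cd i : i <= m -> c %| d i.
  by move=> hi; rewrite dE; apply: bg_dvdall => y; apply: cdvd'.
case: (leqP j m) => hjm.
  have ccH : cc (rho m.+1 G) j = cc G j.
    rewrite /cc !dHlo //; last by lia.
    have h1 := cd _ (leq_trans (leq_pred j) hjm).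
    have h2 := cd _ hjm.
    rewrite -/d.
    have [x ->] : exists x, d j.-1 = x * c by exists (d j.-1 %/ c); rewrite divnK.
    have [y ->] : exists y, d j = y * c by exists (d j %/ c); rewrite divnK.
    by rewrite !mulnK // divnMr.
  have gH : gj (rho m.+1 G) j = gj G j %/ c.
    rewrite /gj /rho nth_cat size_map hsz ifT; last by lia.
    rewrite (nth_map 0) ?hsz; last by lia.
    by rewrite nth_take //; lia.
  have tH : take j.-1 (rho m.+1 G) = map (fun g => g %/ c) (take j.-1 G).
    rewrite /rho take_cat size_map hsz ifT; last by lia.
    by rewrite -map_take take_takel //; lia.
  rewrite ccH gH tH; apply: inSG_divE => //.
    by move=> y; apply: cdvd'; lia.
  have hgc : c %| gj G j.
    apply: cdvd; rewrite /gj.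
    have -> : nth 0 G j.-1 = nth 0 (take m G) j.-1 by rewrite nth_take //; lia.
    by apply: mem_nth; rewrite hsz; lia.
  rewrite mulnCA (mulnC c) divnK //.
  by apply: htel; rewrite hj2 /=; lia.
have ccH : cc (rho m.+1 G) j = cc G j.+1.
  rewrite /cc !dHhi ?prednK //; lia.
have gH : gj (rho m.+1 G) j = gj G j.+1.
  rewrite /gj /rho nth_cat size_map hsz ifF; last by lia.
  rewrite nth_drop /=; congr nth; lia.
have tH : take j.-1 (rho m.+1 G) =
    map (fun g => g %/ c) (take m G) ++ take (j.-1 - m) (drop m.+1 G).
  by rewrite /rho take_cat size_map hsz ifF //; lia.
have tG : take j G = take m G ++ [:: nth 0 G m] ++ take (j.-1 - m) (drop m.+1 G).
  have -> : take j G = take (m.+1 + (j.-1 - m)) G by congr take; lia.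
  by rewrite takeD (take_nth 0) ?catA ?cats1 //; lia.
rewrite ccH gH tH.
have := htel j.+1; rewrite /= tG => h; apply: (@inSG_trans _ _ _ _ (h _)); last by lia.
move=> y; rewrite !mem_cat => /or3P [hy|hy|hy].
- apply: inSG_catl.
  have -> : y = c * (y %/ c) by rewrite mulnC divnK // cdvd.
  apply: inSG_mul; apply: inSG_mem; exact: map_f.
- apply: inSG_catl; move: hy; rewrite inE => /eqP ->.
  apply: inSG_divE => //.
  have := htel m.+1; rewrite /= => h'; apply: h'; lia.
- by apply: inSG_catr; apply: inSG_mem.
Qed.
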